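(* Let $k,n$ be positive integers. The total number of blocks, summed over all $\pi\in NC^k(n)$, equals $\binom{n(k+1)-1}{nk}$.
   Context: A partition $\pi$ of $[N]=\{1,\dots,N\}$ is non-crossing if there are no $1\le a<b<c<d\le N$ with $a,c$ in one block and $b,d$ in another. $NC^k(n)$ is the set of non-crossing partitions of $[kn]$ all of whose blocks have size divisible by $k$. *)

(* Defs.v *)
From mathcomp Require Import all_boot.
Set Implicit Arguments. Unset Strict Implicit. Unset Printing Implicit Defensive.

(* The ground set [N] = {1,..,N} is modelled by 'I_N = {0,..,N-1} with its
   natural order (an order-preserving relabelling). *)

Definition noncrossing (N : nat) (P : {set {set 'I_N}}) : bool :=
  [forall B in P, forall B' in P, (B != B') ==>
    [forall a : 'I_N, forall b : 'I_N, forall c : 'I_N, forall d : 'I_N,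
      [&& a < b, b < c & c < d] ==>
        ~~ [&& a \in B, c \in B, b \in B' & d \in B']]].

Definition NCk (k n : nat) (P : {set {set 'I_(k * n)}}) : bool :=
  [&& partition P [set: 'I_(k * n)], noncrossing P &
      [forall B in P, k %| #|B|]].

(* Main.v *)
Require Import Defs.
From mathcomp Require Import all_boot zify.
Set Implicit Arguments. Unset Strict Implicit. Unset Printing Implicit Defensive.
Lemma card_lt (N x : nat) : x <= N -> #|[set z : 'I_N | z < x]| = x.
Proof.
move=> hx.
have -> : [set z : 'I_N | z < x] = [set widen_ord hx z | z in 'I_x].
  apply/setP=> z; rewrite inE; apply/idP/imsetP.
    move=> zx; exists (Ordinal zx) => //; exact: val_inj.
  by case=> w _ ->; rewrite /= ltn_ord.
rewrite card_imset ?card_ord //; move=> a b /(congr1 val) /= ?; exact: val_inj.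
Qed.

Lemma card_itv (N a b : nat) : a <= b -> b <= N ->
  #|[set z : 'I_N | a <= z < b]| = b - a.
Proof.
move=> hab hb.
have E : [set z : 'I_N | z < b] = [set z : 'I_N | z < a] :|: [set z : 'I_N | a <= z < b].
  apply/setP=> z; rewrite !inE; case: (ltnP z a) => //= h; apply: leq_trans h hab.
have := cardsU [set z : 'I_N | z < a] [set z : 'I_N | a <= z < b].
rewrite -E card_lt // card_lt ?(leq_trans hab) //.
have -> : [set z : 'I_N | z < a] :&: [set z : 'I_N | a <= z < b] = set0.
  by apply/setP=> z; rewrite !inE; case: (ltnP z a).
rewrite cards0 subn0 => H; lia.
Qed.

Definition mn (N : nat) (P : {set {set 'I_N}}) (y : 'I_N) : 'I_N :=
  [arg min_(z < y in pblock P y) val z].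

Section NCP.
Variable N : nat.
Variable P : {set {set 'I_N}}.
Hypothesis hP : partition P [set: 'I_N].

Lemma covP (y : 'I_N) : y \in cover P.
Proof. by case/and3P: hP => /eqP -> _ _; rewrite inE. Qed.

Lemma trivP : trivIset P.
Proof. by case/and3P: hP. Qed.

Lemma inpb (y : 'I_N) : y \in pblock P y.
Proof. by rewrite mem_pblock covP. Qed.

Lemma mn_in y : mn P y \in pblock P y.
Proof. by rewrite /mn; case: arg_minnP; first exact: inpb. Qed.

Lemma mn_le y z : z \in pblock P y -> mn P y <= z.
Proof. by rewrite /mn; case: arg_minnP => [|w _ H]; [exact: inpb | apply: H]. Qed.

Lemma pb_eq y z : z \in pblock P y -> pblock P z = pblock P y.
Proof. exact: same_pblock trivP. Qed.

Lemma mn_eq y z : z \in pblock P y -> mn P z = mn P y.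
Proof.
move=> h; apply: val_inj; apply/eqP; rewrite eqn_leq.
rewrite mn_le ?mn_le //; first by rewrite -(pb_eq h) mn_in.
by rewrite (pb_eq h) mn_in.
Qed.

Lemma mn_self y : mn P (mn P y) = mn P y.
Proof. exact: mn_eq (mn_in y). Qed.

Lemma mn_leself y : mn P y <= y.
Proof. exact: mn_le (inpb y). Qed.

Lemma samepb y z : (z \in pblock P y) = (mn P z == mn P y).
Proof.
apply/idP/eqP; first exact: mn_eq.
move=> e; have h1 := mn_in z; have h2 := mn_in y.
rewrite e in h1; rewrite -(pb_eq h2) (pb_eq h1); exact: inpb.
Qed.

Hypothesis hNC : noncrossing P.

Lemma nocross (a b c d : 'I_N) : a < b -> b < c -> c < d ->
  c \in pblock P a -> d \in pblock P b -> b \in pblock P a.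
Proof.
move=> ab bc cd ca db; apply/negPn/negP => nba.
have Ba := pblock_mem (covP a); have Bb := pblock_mem (covP b).
have ne : pblock P a != pblock P b.
  by apply/eqP=> e; move/negP: nba; rewrite e inpb.
move/forall_inP: hNC => /(_ _ Ba) /forall_inP /(_ _ Bb) /implyP /(_ ne).
move/forallP=> /(_ a) /forallP /(_ b) /forallP /(_ c) /forallP /(_ d).
by rewrite ab bc cd inpb ca db inpb.
Qed.

Lemma lemA (y z : 'I_N) : mn P y <= z <= y -> mn P y <= mn P z.
Proof.
case/andP=> h1 h2; rewrite leqNgt; apply/negP=> lt.
have zny : z \notin pblock P y.
  by rewrite samepb; apply/eqP=> e; rewrite e ltnn in lt.
have z1 : mn P y < z.
  rewrite ltn_neqAle h1 andbT; apply/eqP=> e.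
  by move: zny; rewrite (_ : z = mn P y) ?mn_in //; apply: val_inj.
have z2 : z < y.
  rewrite ltn_neqAle h2 andbT; apply/eqP=> e.
  by move: zny; rewrite (_ : z = y) ?inpb //; apply: val_inj.
have := nocross lt z1 z2.
rewrite (pb_eq (mn_in z)) inpb (pb_eq (mn_in y)) inpb => /(_ isT isT).
rewrite samepb mn_self => /eqP e.
by rewrite e ltnn in lt.
Qed.

Lemma lemB (y z : 'I_N) (p : nat) : mn P y < p -> p <= mn P z -> mn P z <= y ->
  (z <= y) && (z != y).
Proof.
move=> h1 h2 h3.
have zy : z != y.
  apply/eqP=> e; subst z; move: (leq_trans h1 h2); by rewrite ltnn.
rewrite zy andbT leqNgt; apply/negP=> yz.
have mzy : mn P z != y :> nat.
  apply/eqP=> e.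
  have : y \in pblock P z by rewrite (_ : y = mn P z) ?mn_in //; apply: val_inj.
  rewrite samepb => /eqP e2.
  by move: (leq_trans h1 h2); rewrite e2 ltnn.
have a1 : mn P y < mn P z by apply: leq_trans h1 h2.
have a2 : mn P z < y by rewrite ltn_neqAle mzy h3.
have := nocross a1 a2 yz.
rewrite (pb_eq (mn_in y)) inpb (pb_eq (mn_in z)) inpb => /(_ isT isT).
rewrite samepb mn_self => /eqP e.
by rewrite e ltnn in a1.
Qed.

Definition Tm (x : nat) := #|[set z : 'I_N | mn P z < x]|.

Lemma char1 (y : 'I_N) : y.+1 + Tm (mn P y) <= Tm y.+1 + mn P y.
Proof.
have sub : [set z : 'I_N | mn P z < mn P y] :|: [set z : 'I_N | mn P y <= z < y.+1]
     \subset [set z : 'I_N | mn P z < y.+1].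
  apply/subsetP=> z; rewrite !inE => /orP [h|/andP [h1 h2]].
    by apply: leq_trans h _; apply: leqW; apply: mn_leself.
  exact: leq_ltn_trans (mn_leself z) h2.
have dis : [set z : 'I_N | mn P z < mn P y] :&: [set z : 'I_N | mn P y <= z < y.+1] = set0.
  apply/setP=> z; rewrite !inE; apply/negP=> /and3P [h1 h2 h3].
  have := lemA (z:=z) (y:=y); rewrite h2 -ltnS h3 => /(_ isT).
  by rewrite leqNgt h1.
have := subset_leq_card sub; rewrite cardsU dis cards0 subn0 card_itv //.
  rewrite /Tm; have := mn_leself y; lia.
  rewrite /Tm; have := mn_leself y; lia.
Qed.

Lemma char2 (y : 'I_N) (p : nat) : mn P y < p -> p <= y -> Tm y.+1 + p < y.+1 + Tm p.
Proof.
move=> h1 h2.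
have sub : [set z : 'I_N | mn P z < y.+1] \subset
     [set z : 'I_N | mn P z < p] :|: ([set z : 'I_N | p <= z < y.+1] :\ y).
  apply/subsetP=> z; rewrite !inE ltnS => h; case: ltnP => //= h'.
  by have /andP [a b] := lemB h1 h' h; rewrite b (leq_trans h' (mn_leself z)) ?ltnS a.
have := subset_leq_card sub.
have := cardsU [set z : 'I_N | mn P z < p] ([set z : 'I_N | p <= z < y.+1] :\ y).
have := cardsD1 y [set z : 'I_N | p <= z < y.+1].
rewrite card_itv // ?inE ?h2 ?ltnSn //; last by apply: leq_trans h2 _.
rewrite /Tm; lia.
Qed.

Lemma ballot (x : nat) : x <= N -> x <= Tm x.
Proof.
move=> hx; rewrite -{1}(card_lt hx); apply: subset_leq_card.
by apply/subsetP=> z; rewrite !inE; apply: leq_ltn_trans (mn_leself z).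
Qed.

Lemma TmN : Tm N = N.
Proof.
rewrite /Tm.
have -> : [set z : 'I_N | mn P z < N] = setT.
  by apply/setP=> z; rewrite !inE (leq_ltn_trans (mn_leself z)).
by rewrite cardsT card_ord.
Qed.

Lemma card_mins : #|P| = #|[set y : 'I_N | mn P y == y]|.
Proof.
have E : P = [set pblock P y | y in [set y : 'I_N | mn P y == y]].
  apply/setP=> B; apply/idP/imsetP.
    move=> BP; case/and3P: hP => _ _ nz.
    have : B != set0 by apply/eqP=> e; rewrite -e BP in nz.
    case/set0Pn=> x xB; exists (mn P x); first by rewrite inE mn_self.
    by rewrite (pb_eq (mn_in x)) (def_pblock trivP BP xB).
  by case=> y _ ->; apply: pblock_mem; apply: covP.
rewrite {1}E card_in_imset // => a b; rewrite !inE => /eqP ea /eqP eb e.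
by rewrite -ea -eb; apply: mn_eq; rewrite -e inpb.
Qed.

End NCP.

Lemma card_inj_bound (T : finType) (A : {set T}) (f : T -> nat) (m : nat) :
  {in A &, injective f} -> (forall x, x \in A -> f x < m) -> #|A| <= m.
Proof.
move=> inj bnd.
have inj' : {in A &, injective (fun x => (inord (f x) : 'I_m.+1))}.
  move=> x y xA yA /(congr1 val) /=; rewrite !inordK; last 2 first.
  - by apply: leqW; apply: bnd.
  - by apply: leqW; apply: bnd.
  by move/inj; apply.
rewrite -(card_in_imset inj').
apply: leq_trans (_ : _ <= #|[set d : 'I_m.+1 | d < m]|) _; last by rewrite card_lt.
apply: subset_leq_card; apply/subsetP=> z /imsetP [x xA ->].
by rewrite inE inordK ?bnd //; apply: leqW; apply: bnd.
Qed.

Section Build.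
Variable N : nat.
Variable t : nat -> nat.
Definition T (x : nat) := \sum_(0 <= j < x) t j.
Hypothesis hb : forall x, x <= N -> x <= T x.
Hypothesis hT : T N = N.

Lemma T0 : T 0 = 0. Proof. by rewrite /T big_geq. Qed.
Lemma TS x : T x.+1 = T x + t x. Proof. by rewrite /T big_nat_recr. Qed.
Lemma Tmono x y : x <= y -> T x <= T y.
Proof.
move=> /subnKC <-; elim: (y - x) => [|d IH]; first by rewrite addn0.
by rewrite addnS TS; apply: leq_trans IH (leq_addr _ _).
Qed.

Definition cond (p y : nat) := y.+1 + T p <= T y.+1 + p.

Definition o0 (y : 'I_N) : 'I_N := Ordinal (leq_ltn_trans (leq0n y) (ltn_ord y)).

Definition own (y : 'I_N) : 'I_N :=
  [arg max_(p > o0 y | (p <= y) && cond p y) val p].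

Lemma own_spec (y : 'I_N) :
  [/\ own y <= y, cond (own y) y & forall p : nat, own y < p -> p <= y -> ~~ cond p y].
Proof.
rewrite /own; case: arg_maxnP.
  apply/andP; split=> //; rewrite /cond T0 addn0 /= addn0; apply: hb; exact: ltn_ord.
move=> i /andP [h1 h2] H; split=> // p ip py; apply/negP=> cp.
have pN : p < N by apply: leq_ltn_trans py (ltn_ord y).
have := H (Ordinal pN); rewrite /= py cp => /(_ isT).
by rewrite leqNgt ip.
Qed.

Lemma own_le y : own y <= y. Proof. by case: (own_spec y) => h _ _. Qed.
Lemma own_cond y : cond (own y) y. Proof. by case: (own_spec y) => _ h _. Qed.
Lemma own_max y p : own y < p -> p <= y -> ~~ cond p y.
Proof. by case: (own_spec y) => _ _; apply. Qed.

Lemma own_pos y : 0 < t (own y).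
Proof.
have c := own_cond y; have le := own_le y.
case: (ltngtP (own y) y) le => // [lt|eq] _.
  have := own_max (ltnSn _) lt; move: c; rewrite /cond !TS; lia.
move: c; rewrite /cond eq !TS; lia.
Qed.

Lemma own_self (y : 'I_N) : 0 < t y -> own y = y.
Proof.
move=> tp; apply: val_inj; apply/eqP; rewrite eqn_leq own_le /=.
rewrite leqNgt; apply/negP=> lt; have := own_max lt (leqnn _).
by rewrite /cond !TS; lia.
Qed.

Lemma own_idem y : own (own y) = own y.
Proof. exact: own_self (own_pos y). Qed.

Definition C (i : 'I_N) := [set z | own z == i].

Lemma C_bound (i : 'I_N) : own i = i -> #|C i| <= t i.
Proof.
move=> oi.
have iC : i \in C i by rewrite inE oi.
rewrite (cardsD1 i) iC add1n.
have tp : 0 < t i by rewrite -oi own_pos.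
suff : #|C i :\ i| <= (t i).-1 by rewrite -ltnS prednK.
pose D (z : 'I_N) := T z.+1 + i - z.+1 - T i.
have facts : forall z, z \in C i :\ i ->
   [/\ i < z, cond i z, ~~ cond i.+1 z & forall p, i < p -> p <= z -> ~~ cond p z].
  move=> z; rewrite !inE => /andP [zi /eqP oz].
  have lt : i < z.
    rewrite ltn_neqAle; rewrite -oz own_le andbT; apply/eqP=> e.
    by move/eqP: zi; apply; apply: val_inj => /=; rewrite -oz e.
  split=> //; first by rewrite -oz own_cond.
    by apply: own_max; rewrite ?oz // ltnSn.
  by move=> p; rewrite -oz; apply: own_max.
apply: (card_inj_bound (f := D)).
  move=> z1 z2 h1 h2 e; apply: val_inj; apply/eqP; apply/negP=> ne.
  have [lt1 c1 _ m1] := facts _ h1; have [lt2 c2 _ m2] := facts _ h2.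
  case: (ltngtP z1 z2) ne => // [lt|lt] _.
    have := m2 z1.+1 (ltnW lt1) lt.
    move: e c1 c2; rewrite /D /cond; lia.
  have := m1 z2.+1 (ltnW lt2) lt.
  move: e c1 c2; rewrite /D /cond; lia.
move=> z h; have [lt c nc _] := facts _ h.
move: c nc; rewrite /D /cond !TS; lia.
Qed.

Lemma C_empty (i : 'I_N) : own i != i -> C i = set0.
Proof.
move=> ne; apply/setP=> z; rewrite !inE; apply/negP=> /eqP e.
by move/eqP: ne; apply; rewrite -e own_idem.
Qed.

Lemma C_sum : \sum_(i : 'I_N) #|C i| = N.
Proof.
transitivity (\sum_(z : 'I_N) 1); last by rewrite sum1_card card_ord.
rewrite [RHS](partition_big own predT) //=.
by apply: eq_bigr => i _; rewrite -sum1_card; apply: eq_bigl => z; rewrite inE.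
Qed.

Lemma C_eq (i : 'I_N) : #|C i| = t i.
Proof.
have le : forall j : 'I_N, #|C j| <= t j.
  move=> j; case: (eqVneq (own j) j) => [e|ne]; first exact: C_bound.
  by rewrite C_empty // cards0.
have := @leqif_sum 'I_N predT (fun j => #|C j| == t j) (fun j => #|C j|) (fun j => t j).
move=> /(_ (fun j _ => leqif_eq (le j))) [_].
rewrite (_ : \sum_(j : 'I_N | predT j) t j = N); last by rewrite -[RHS]hT /T big_mkord.
rewrite C_sum eqxx => /esym /forall_inP /(_ i isT) /eqP //.
Qed.

Lemma t_nonown (i : 'I_N) : own i != i -> t i = 0.
Proof. by move=> ne; rewrite -C_eq C_empty // cards0. Qed.

Definition Pb := preim_partition own [set: 'I_N].

Lemma Pb_part : partition Pb [set: 'I_N].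
Proof. exact: preim_partitionP. Qed.

Lemma Pb_pblock (y z : 'I_N) : (z \in pblock Pb y) = (own y == own z).
Proof.
rewrite /Pb /preim_partition pblock_equivalence_partition ?inE //.
move=> a b c _ _ _; split; first by [].
by move/eqP=> ->.
Qed.

Lemma Pb_pblockE (y : 'I_N) : pblock Pb y = C (own y).
Proof. by apply/setP=> z; rewrite Pb_pblock inE eq_sym. Qed.

Lemma Pb_mn (y : 'I_N) : mn Pb y = own y.
Proof.
have h1 : own y \in pblock Pb y by rewrite Pb_pblock own_idem.
apply: val_inj; apply/eqP; rewrite eqn_leq (mn_le Pb_part h1) /=.
have := mn_in Pb_part y; rewrite Pb_pblock => /eqP ->.
exact: own_le.
Qed.

Lemma Pb_nc : noncrossing Pb.
Proof.
apply/forall_inP=> B BP; apply/forall_inP=> B' BP'; apply/implyP=> ne.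
apply/forallP=> a; apply/forallP=> b; apply/forallP=> c; apply/forallP=> d.
apply/implyP=> /and3P [ab bc cd]; apply/negP=> /and4P [aB cB bB dB].
have tr : trivIset Pb by case/and3P: Pb_part.
have ea := def_pblock tr BP aB; have ec := def_pblock tr BP cB.
have eb := def_pblock tr BP' bB; have ed := def_pblock tr BP' dB.
have ac : own a = own c by apply/eqP; rewrite -Pb_pblock ea.
have bd : own b = own d by apply/eqP; rewrite -Pb_pblock eb.
have ij : (own a : nat) != own b.
  by apply: contra ne => /eqP /val_inj e; rewrite -ea -eb; apply/eqP/setP=> z; rewrite !Pb_pblock e.
have la := own_le a; have lb := own_le b; have lc := own_le c; have ld := own_le d.
have ca := own_cond a; have cb := own_cond b; have cc := own_cond c; have cdd := own_cond d.
case: (ltngtP (own a) (own b)) ij => // [lt|lt] _.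
  case: (leqP (own b) a) => h.
    have n1 := own_max lt h.
    have n2 : ~~ cond a.+1 b by apply: own_max; [rewrite ltnS | ].
    move: n1 n2 cb; rewrite /cond; lia.
  have n1 : ~~ cond (own b) c by apply: own_max; [rewrite -ac | apply: ltnW; apply: leq_ltn_trans bc].
  have n2 : ~~ cond c.+1 d by apply: own_max; [rewrite -bd; apply: leq_ltn_trans lb (ltn_trans bc _) | ].
  move: n1 n2 cdd; rewrite /cond -bd; lia.
have n1 : ~~ cond (own a) b by apply: own_max; [ | apply: ltnW; apply: leq_ltn_trans la ab].
have n2 : ~~ cond b.+1 c by apply: own_max; [rewrite -ac; apply: leq_ltn_trans (leq_trans la (ltnW ab)) _ | ].
move: n1 n2 cc; rewrite /cond -ac; lia.
Qed.

End Build.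

Lemma own_unique N (t : nat -> nat) (hb : forall x, x <= N -> x <= T t x) (hT : T t N = N)
   (y m : 'I_N) : m <= y -> cond t m y -> (forall p, m < p -> p <= y -> ~~ cond t p y) ->
   m = own t y.
Proof.
move=> h1 h2 h3; apply: val_inj => /=.
case: (ltngtP m (own t y)) => // lt.
  by have := h3 _ lt (own_le hb y); rewrite (own_cond hb).
by have := own_max hb lt h1; rewrite h2.
Qed.

Section Code.
Variable N : nat.

Definition tP (P : {set {set 'I_N}}) (j : nat) : nat :=
  if insub j is Some y then (if mn P y == y then #|pblock P y| else 0) else 0.

Lemma tP_ord P (y : 'I_N) : tP P y = if mn P y == y then #|pblock P y| else 0.
Proof. by rewrite /tP valK. Qed.

Lemma tP_big P (j : nat) : N <= j -> tP P j = 0.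
Proof. by move=> h; rewrite /tP insubN // -leqNgt. Qed.

Lemma tP_le P j : tP P j <= N.
Proof.
rewrite /tP; case: insub => // y; case: ifP => // _.
by rewrite -[X in _ <= X]card_ord max_card.
Qed.

Variable P : {set {set 'I_N}}.
Hypothesis hP : partition P [set: 'I_N].
Hypothesis hNC : noncrossing P.

Lemma T_tP x : x <= N -> T (tP P) x = Tm P x.
Proof.
elim: x => [|x IH] h; first by rewrite T0 /Tm; apply/esym/eqP; rewrite cards_eq0; apply/eqP/setP=> z; rewrite !inE.
rewrite TS IH ?(ltnW h) // /Tm.
have -> : [set z | mn P z < x.+1] = [set z | mn P z < x] :|: [set z | mn P z == x :> nat].
  by apply/setP=> z; rewrite !inE ltnS leq_eqVlt orbC.
have -> : tP P x = #|[set z | mn P z == x :> nat]|.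
  rewrite (_ : x = Ordinal h) // tP_ord.
  case: eqP => [e|ne].
    by apply: eq_card => z; rewrite inE (samepb hP) e -(inj_eq val_inj).
  apply/esym/eqP; rewrite cards_eq0; apply/eqP/setP=> z; rewrite !inE.
  apply/negP=> /eqP e; apply: ne.
  have ez : mn P z = Ordinal h by apply: val_inj.
  by rewrite -ez mn_self.
rewrite cardsU; set A := _ :&: _.
suff -> : A = set0 by rewrite cards0 subn0.
by apply/setP=> z; rewrite !inE; case: (ltngtP (mn P z) x).
Qed.

Lemma tP_hb x : x <= N -> x <= T (tP P) x.
Proof. by move=> h; rewrite T_tP // ballot. Qed.

Lemma tP_hT : T (tP P) N = N.
Proof. by rewrite T_tP // TmN. Qed.

Lemma mn_own (y : 'I_N) : mn P y = own (tP P) y.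
Proof.
apply: (own_unique tP_hb tP_hT); first exact: mn_leself.
  rewrite /cond T_tP ?T_tP //; first exact: char1.
  apply: leq_trans (mn_leself hP y) (ltnW (ltn_ord y)).
move=> p h1 h2; rewrite /cond T_tP ?T_tP; last 2 first.
- exact: ltn_ord.
- exact: leq_trans h2 (ltnW (ltn_ord y)).
by rewrite -ltnNge; apply: char2.
Qed.

End Code.

Lemma cond_ext (t1 t2 : nat -> nat) p y : t1 =1 t2 -> cond t1 p y = cond t2 p y.
Proof.
move=> e; have TE : forall x, T t1 x = T t2 x by move=> x; apply: eq_bigr => i _.
by rewrite /cond !TE.
Qed.

Lemma eq_own N (t1 t2 : nat -> nat) (y : 'I_N)
  (hb1 : forall x, x <= N -> x <= T t1 x)
  (hb2 : forall x, x <= N -> x <= T t2 x) (hT2 : T t2 N = N) :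
  t1 =1 t2 -> own t1 y = own t2 y.
Proof.
move=> e; apply: (own_unique hb2 hT2); first exact: own_le.
  by rewrite -(cond_ext _ _ e) own_cond.
by move=> p h1 h2; rewrite -(cond_ext _ _ e); apply: own_max.
Qed.

Lemma part_eq N (P1 P2 : {set {set 'I_N}}) :
  partition P1 [set: 'I_N] -> partition P2 [set: 'I_N] ->
  (forall y, pblock P1 y = pblock P2 y) -> P1 = P2.
Proof.
move=> h1 h2 e.
have E : forall P, partition P [set: 'I_N] -> P = [set pblock P y | y in [set: 'I_N]].
  move=> P hP; apply/setP=> B; apply/idP/imsetP.
    move=> BP; have nz : set0 \notin P by case/and3P: hP.
    have : B != set0 by apply/eqP=> e'; rewrite -e' BP in nz.
    case/set0Pn=> x xB; exists x => //.
    by rewrite (def_pblock (trivP hP) BP xB).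
  by case=> y _ ->; apply: pblock_mem; apply: covP.
rewrite (E _ h1) (E _ h2); apply: eq_imset => y; exact: e.
Qed.

Lemma tP_inj N (P1 P2 : {set {set 'I_N}}) :
  partition P1 [set: 'I_N] -> noncrossing P1 ->
  partition P2 [set: 'I_N] -> noncrossing P2 ->
  (forall j, tP P1 j = tP P2 j) -> P1 = P2.
Proof.
move=> h1 n1 h2 n2 e.
have em : forall y, mn P1 y = mn P2 y.
  move=> y; rewrite (mn_own h1 n1) (mn_own h2 n2).
  by apply: eq_own; [exact: tP_hb | exact: tP_hb | exact: tP_hT | ].
apply: part_eq => // y; apply/setP=> z.
by rewrite (samepb h1) (samepb h2) !em.
Qed.

Section Ffun.
Variable N : nat.
Notation V := {ffun 'I_N.+1 -> 'I_N.+1}.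

Definition fv (u : V) (j : nat) : nat := if insub j is Some y then val (u y) else 0.

Lemma fv_ord (u : V) (j : 'I_N.+1) : fv u j = u j.
Proof. by rewrite /fv valK. Qed.

Lemma fv_big (u : V) j : N.+1 <= j -> fv u j = 0.
Proof. by move=> h; rewrite /fv insubN // -leqNgt. Qed.

Definition tree (u : V) := (T (fv u) N.+1 == N) && [forall x : 'I_N.+1, x <= T (fv u) x].
Definition divk (k : nat) (u : V) := [forall j, k %| u j].
Definition code (P : {set {set 'I_N}}) : V := [ffun j : 'I_N.+1 => inord (tP P j)].
Definition NCg (k : nat) (P : {set {set 'I_N}}) :=
  [&& partition P [set: 'I_N], noncrossing P & [forall B in P, k %| #|B|]].

Lemma fv_code P j : fv (code P) j = tP P j.
Proof.
case: (ltnP j N.+1) => h.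
  by rewrite (_ : j = Ordinal h) // fv_ord ffunE inordK // ltnS tP_le.
by rewrite fv_big // tP_big // ltnW.
Qed.

Lemma T_code P x : T (fv (code P)) x = T (tP P) x.
Proof. by apply: eq_bigr => i _; rewrite fv_code. Qed.

Lemma code_tree P : partition P [set: 'I_N] -> noncrossing P -> tree (code P).
Proof.
move=> hP hNC; apply/andP; split.
  by rewrite T_code TS tP_hT // tP_big // addn0.
apply/forallP=> x; rewrite T_code; apply: tP_hb => //; rewrite -ltnS; exact: ltn_ord.
Qed.

Lemma code_divk k P : NCg k P -> divk k (code P).
Proof.
case/and3P=> hP _ /forall_inP hB; apply/forallP=> j.
rewrite -fv_ord fv_code /tP; case: insub => // y; case: ifP => // _.
by apply: hB; apply: pblock_mem; apply: covP.
Qed.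

Lemma code_inj k : {in [pred P | NCg k P] &, injective code}.
Proof.
move=> P1 P2; rewrite !inE => /and3P [h1 n1 _] /and3P [h2 n2 _] e.
apply: (tP_inj h1 n1 h2 n2) => j; by rewrite -!fv_code e.
Qed.

Section FromU.
Variable u : V.
Hypothesis hu : tree u.

Lemma hb_u x : x <= N -> x <= T (fv u) x.
Proof.
move=> h; case/andP: hu => _ /forallP /(_ (Ordinal (h : x < N.+1))) //.
Qed.

Lemma fvN : fv u N = 0.
Proof.
have := hb_u (leqnn N); case/andP: hu => /eqP; rewrite TS; lia.
Qed.

Lemma hT_u : T (fv u) N = N.
Proof.
have := hb_u (leqnn N); case/andP: hu => /eqP; rewrite TS; lia.
Qed.

Definition build := Pb N (fv u).

Lemma build_pblock (y : 'I_N) : #|pblock build y| = fv u (own (fv u) y).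
Proof. by rewrite /build Pb_pblockE C_eq //; [exact: hb_u | exact: hT_u]. Qed.

Lemma build_NCg k : divk k u -> NCg k build.
Proof.
move=> /forallP hk; apply/and3P; split; first exact: Pb_part.
  exact: Pb_nc hb_u hT_u.
apply/forall_inP=> B BP.
have nz : set0 \notin build by case/and3P: (Pb_part N (fv u)).
have : B != set0 by apply/eqP=> e'; rewrite -e' BP in nz.
case/set0Pn=> x xB.
rewrite -(def_pblock (trivP (Pb_part N (fv u))) BP xB) build_pblock.
set w := own _ x.
have wl : w < N.+1 by apply: leq_trans (ltn_ord w) _.
by rewrite (_ : (w : nat) = Ordinal wl) // fv_ord.
Qed.

Lemma code_build : code build = u.
Proof.
apply/ffunP=> j; apply: val_inj; rewrite ffunE /=.
suff -> : tP build j = u j by rewrite inordK.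
rewrite -fv_ord.
case: (ltnP j N) => h.
  rewrite (_ : (j : nat) = Ordinal h) // tP_ord /build Pb_mn; [|exact: hb_u|exact: hT_u].
  case: eqP => [e|ne].
    by rewrite -/build build_pblock e.
  by rewrite (t_nonown hb_u hT_u) //; apply/eqP.
have -> : (j : nat) = N by apply/eqP; rewrite eqn_leq h -ltnS ltn_ord.
by rewrite tP_big // fvN.
Qed.

End FromU.

Lemma code_image k :
  [set code P | P in [pred P | NCg k P]] = [set u | tree u && divk k u].
Proof.
apply/setP=> u; rewrite inE; apply/imsetP/andP.
  case=> P; rewrite inE => hP ->; split; last exact: code_divk.
  by case/and3P: hP => h1 h2 _; apply: code_tree.
case=> ht hd; exists (build u); last by rewrite code_build.
by rewrite inE; apply: build_NCg.
Qed.

Definition nz (u : V) := #|[set j | 0 < u j]|.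

Lemma card_nz P : partition P [set: 'I_N] -> #|P| = nz (code P).
Proof.
move=> hP; rewrite (card_mins hP) /nz.
have -> : [set j | 0 < code P j] =
          [set widen_ord (leqnSn N) y | y in [set y : 'I_N | mn P y == y]].
  apply/setP=> j; rewrite inE; apply/idP/imsetP.
    rewrite -fv_ord fv_code => pos.
    have h : j < N by rewrite ltnNge; apply/negP=> h; rewrite tP_big in pos.
    exists (Ordinal h); last by apply: val_inj.
    by rewrite inE; move: pos; rewrite (_ : tP P j = tP P (Ordinal h)) // tP_ord; case: eqP.
  case=> y; rewrite inE => /eqP e ->.
  rewrite -fv_ord fv_code /= tP_ord e eqxx card_gt0; apply/set0Pn; exists y.
  exact: inpb.
rewrite card_imset //; move=> a b /(congr1 val) /= ?; exact: val_inj.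
Qed.

End Ffun.

Lemma mod_sub (M a : nat) : M <= a -> a < M + M -> a %% M = a - M.
Proof.
move=> h1 h2; rewrite -{1}(subnK h1) modnDr modn_small //; lia.
Qed.

Section Cyc.
Variable N : nat.
Notation M := N.+1.
Notation V := {ffun 'I_N.+1 -> 'I_N.+1}.

Definition rot (v : V) (r : nat) : V := [ffun j : 'I_N.+1 => v (inord ((j + r) %% M))].

Lemma fv_inord (v : V) m : m < M -> fv v m = v (inord m).
Proof. by move=> h; rewrite -{1}(inordK h) fv_ord. Qed.

Lemma fv_rot v r j : j < M -> fv (rot v r) j = fv v ((j + r) %% M).
Proof.
move=> h; rewrite (fv_inord _ h) ffunE fv_inord ?ltn_pmod // inordK //.
Qed.

Lemma rotT v r x : r < M -> x <= M ->
  T (fv (rot v r)) x + T (fv v) r =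
  if r + x <= M then T (fv v) (r + x) else T (fv v) M + T (fv v) (r + x - M).
Proof.
move=> hr; elim: x => [|x IH] hx; first by rewrite T0 add0n addn0 (ltnW hr).
have {}IH := IH (ltnW hx).
rewrite TS fv_rot //.
case: (ltnP (r + x) M) => h1.
  rewrite (ltnW h1) in IH.
  have A : (x + r) %% M = r + x by rewrite modn_small // addnC.
  have B : (r + x.+1 <= M) = true by rewrite addnS.
  rewrite A B addnS [T _ (r + x).+1]TS; lia.
case: (eqVneq (r + x) M) => h2.
  rewrite h2 leqnn in IH.
  have A : (x + r) %% M = 0 by rewrite addnC h2 modnn.
  have B : (r + x.+1 <= M) = false by rewrite addnS h2 ltnn.
  have C : r + x.+1 - M = 1 by lia.
  rewrite A B C [T _ 1]TS T0; lia.
have h3 : M < r + x by rewrite ltn_neqAle eq_sym h2 h1.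
rewrite leqNgt h3 /= in IH.
have A : (x + r) %% M = r + x - M by rewrite addnC mod_sub ?(ltnW h3) //; lia.
have B : (r + x.+1 <= M) = false by lia.
have C : r + x.+1 - M = (r + x - M).+1 by lia.
rewrite A B C [T _ (r + x - M).+1]TS; lia.
Qed.

Lemma rotTM v r : r < M -> T (fv (rot v r)) M = T (fv v) M.
Proof.
move=> hr; have := rotT v hr (leqnn M).
case: ifP => h.
  have -> : r = 0 by lia.
  by rewrite T0 addn0 add0n.
rewrite addnK => /eqP; rewrite eqn_add2r => /eqP //.
Qed.

Lemma tree_uniq v r1 r2 : T (fv v) M = N -> r1 < M -> r2 < M ->
  tree (rot v r1) -> tree (rot v r2) -> r1 = r2.
Proof.
move=> hv.
wlog lt : r1 r2 / r1 < r2.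
  move=> W h1 h2 t1 t2; case: (ltngtP r1 r2) => l; first exact: W.
    by apply/esym; apply: W.
  by [].
move=> h1 h2 /andP [_ /forallP t1] /andP [_ /forallP t2].
have x1 : r2 - r1 < M by lia.
have := t1 (Ordinal x1); have := rotT v h1 (ltnW x1); rewrite /=.
rewrite (_ : r1 + (r2 - r1) = r2) ?(ltnW h2); last by lia.
move=> E1 i1.
have x2 : M - r2 + r1 < M by lia.
have := t2 (Ordinal x2); have := rotT v h2 (ltnW x2); rewrite /=.
case: ifP => h.
  have e : r2 + (M - r2 + r1) = M by lia.
  have r10 : r1 = 0 by lia.
  rewrite e => E2 i2; move: E1 E2 i1 i2; rewrite r10 T0; lia.
have e : r2 + (M - r2 + r1) - M = r1 by lia.
rewrite e => E2 i2; move: E1 E2 i1 i2; rewrite hv; lia.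
Qed.

Definition Fk (v : V) (y : nat) := T (fv v) y + M - y.

Lemma tree_exists v : T (fv v) M = N -> exists2 r, r < M & tree (rot v r).
Proof.
move=> hv.
pose key (y : 'I_M) := Fk v y * M + y.
pose r := [arg min_(y < (ord0 : 'I_M)) key y].
have kr : forall y, key r <= key y.
  by move=> y; rewrite /r; case: arg_minnP => // i _ H; apply: H.
have c1 : forall y : 'I_M, Fk v r <= Fk v y.
  move=> y; rewrite leqNgt; apply/negP=> lt.
  have := kr y; rewrite /key.
  have := leq_mul lt (leqnn M); rewrite mulSn.
  have := ltn_ord y; lia.
have c2 : forall y : 'I_M, y < r -> Fk v r < Fk v y.
  move=> y yr; rewrite ltn_neqAle c1 andbT; apply/negP=> /eqP e.
  have := kr y; rewrite /key e; lia.
exists r => //.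
apply/andP; split; first by rewrite rotTM // hv.
apply/forallP=> x.
have hx := ltn_ord x; have hr := ltn_ord r.
have := rotT v hr (ltnW hx).
case: ifP => h.
  case: (ltnP (r + x) M) => h'.
    have := c1 (Ordinal h'); rewrite /Fk /=; lia.
  have e : r + x = M by lia.
  have r0 : 0 < r by lia.
  have := c2 ord0 r0; rewrite /Fk /= T0 e hv; lia.
have y1 : r + x - M < M by lia.
have := c2 (Ordinal y1); rewrite /Fk /= hv => H.
have : r + x - M < r by lia.
move=> /H; lia.
Qed.

Lemma rot_rot v r s : rot (rot v r) s = rot v (s + r).
Proof.
apply/ffunP=> j; rewrite !ffunE inordK ?ltn_pmod // modnDml addnA //.
Qed.

Lemma rot_mod v r : rot v (r %% M) = rot v r.
Proof. by apply/ffunP=> j; rewrite !ffunE modnDmr. Qed.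

Lemma rot0 v : rot v 0 = v.
Proof. by apply/ffunP=> j; rewrite !ffunE addn0 modn_small // inord_val. Qed.

Lemma rotM v : rot v M = v.
Proof. by rewrite -rot_mod modnn rot0. Qed.

Lemma rot_divk k v r : divk k v -> divk k (rot v r).
Proof. by move/forallP=> h; apply/forallP=> j; rewrite ffunE. Qed.

Lemma mod_neg (a : nat) : a < M -> (M - a) %% M = if a == 0 then 0 else M - a.
Proof.
move=> h; case: eqP => [->|ne]; first by rewrite subn0 modnn.
by rewrite modn_small //; lia.
Qed.

Definition Aset k := [set p : V * 'I_M | (tree p.1 && divk k p.1) && (0 < p.1 p.2)].
Definition Bset k := [set v : V | [&& T (fv v) M == N, divk k v & 0 < v ord0]].

Lemma cyc_bij k : #|Aset k| = #|Bset k|.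
Proof.
pose h (p : V * 'I_M) := rot p.1 p.2.
have inj : {in Aset k &, injective h}.
  move=> [u i] [u' i']; rewrite !inE /h /= => /andP [/andP [t1 _] _] /andP [/andP [t2 _] _] e.
  have e1 : u = rot (rot u i) (M - i) by rewrite rot_rot subnK ?rotM // ltnW.
  have e2 : u' = rot (rot u' i') (M - i') by rewrite rot_rot subnK ?rotM // ltnW.
  rewrite -e in e2.
  have hv : T (fv (rot u i)) M = N by rewrite rotTM //; case/andP: t1 => /eqP.
  have := tree_uniq hv (ltn_pmod (M - i) (ltn0Sn N)) (ltn_pmod (M - i') (ltn0Sn N)).
  rewrite !rot_mod -e1 -e2 => /(_ t1 t2).
  rewrite !mod_neg // => E.
  have ii : i = i'.
    apply: val_inj => /=; move: (ltn_ord i) (ltn_ord i') E.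
    by case: eqP => [a|a]; case: eqP => [b|b]; lia.
  by move: e2; rewrite -ii -e1 => <-.
rewrite -(card_in_imset inj); apply: eq_card => v; apply/imsetP/idP.
  case=> [[u i]]; rewrite !inE /h /= => /andP [/andP [/andP [/eqP tu tt] dv] pos] ->.
  rewrite rotTM // tu eqxx rot_divk //= ffunE add0n modn_small // inord_val //.
rewrite inE => /and3P [/eqP hv dv pos].
have [r hr tr] := tree_exists hv.
have hi : (M - r) %% M < M by apply: ltn_pmod.
exists (rot v r, Ordinal hi).
  rewrite inE /= tr rot_divk //= ffunE /= modnDml subnK ?(ltnW hr) // modnn.
  by rewrite (_ : inord 0 = ord0) //; apply: val_inj; rewrite /= inordK.
by rewrite /h /= rot_rot -rot_mod modnDml subnK ?(ltnW hr) // modnn rot0.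
Qed.

Lemma cyc_count k : \sum_(u : V | tree u && divk k u) nz u = #|Bset k|.
Proof.
rewrite -cyc_bij /Aset -sum1_card.
rewrite (eq_bigr (fun u : V => \sum_(j | 0 < u j) 1)); last by move=> u _; rewrite sum1_card /nz cardsE.
rewrite pair_big_dep /=; apply: eq_bigl => p; rewrite inE //.
Qed.

End Cyc.

Lemma hockey m s : \sum_(b < s.+1) 'C(b + m, m) = 'C(s + m.+1, m.+1).
Proof.
elim: s => [|s IH]; first by rewrite big_ord_recr big_ord0 /= !binn.
by rewrite big_ord_recr IH /= [s.+1 + m.+1]addSn binS addSnnS.
Qed.

Lemma comp_count K : forall m s, s < K ->
  #|[set w : {ffun 'I_m.+1 -> 'I_K} | \sum_j (w j : nat) == s]| = 'C(s + m, m).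
Proof.
elim=> [|m IH] s sK.
  rewrite addn0 bin0.
  have -> : [set w : {ffun 'I_1 -> 'I_K} | \sum_j (w j : nat) == s] =
            [set [ffun=> Ordinal sK]].
    apply/setP=> w; rewrite !inE big_ord1; apply/eqP/eqP => [e|->].
      apply/ffunP=> j; rewrite ffunE; apply: val_inj => /=; rewrite -e.
      by rewrite (_ : j = ord0) //; apply: val_inj; case: j => [[]].
    by rewrite ffunE.
  by rewrite cards1.
pose psi (p : 'I_K * {ffun 'I_m.+1 -> 'I_K}) : {ffun 'I_m.+2 -> 'I_K} :=
  [ffun j => if unlift ord0 j is Some i then p.2 i else p.1].
pose phi (w : {ffun 'I_m.+2 -> 'I_K}) := (w ord0, [ffun i => w (lift ord0 i)]).
have bij : bijective psi.
  exists phi.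
    move=> [a w]; rewrite /phi /psi /= ffunE unlift_none; congr pair.
    by apply/ffunP=> i; rewrite !ffunE liftK.
  move=> w; apply/ffunP=> j; rewrite /psi /phi ffunE /=.
  by case: unliftP => [i ->|->]; rewrite ?ffunE.
have spsi : forall p, \sum_j (psi p j : nat) = p.1 + \sum_i (p.2 i : nat).
  move=> p; rewrite big_ord_recl /psi ffunE unlift_none; congr addn.
  by apply: eq_bigr => i _; rewrite ffunE liftK.
rewrite -sum1_card (reindex psi); last by apply: onW_bij.
rewrite (eq_bigl (fun p : 'I_K * {ffun 'I_m.+1 -> 'I_K} => p.1 + \sum_i (p.2 i : nat) == s)); last by move=> p; rewrite inE spsi.
rewrite -(pair_big_dep predT (fun (a : 'I_K) (w : {ffun 'I_m.+1 -> 'I_K}) => a + \sum_i (w i : nat) == s) (fun _ _ => 1)) /=.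
rewrite (eq_bigr (fun a : 'I_K => if a <= s then 'C(s - a + m, m) else 0)); last first.
  move=> a _; case: leqP => h.
    rewrite -(IH (s - a)); last by apply: leq_ltn_trans (leq_subr _ _) sK.
    rewrite -sum1_card; apply: eq_bigl => w; rewrite inE.
    by rewrite -[RHS](eqn_add2l a) subnKC.
  rewrite big1 // => w /eqP e; lia.
transitivity (\sum_(i < s.+1) 'C(s - i + m, m)).
  rewrite [RHS](big_ord_widen K (fun a => 'C(s - a + m, m)) sK) [RHS]big_mkcond.
  by apply: eq_bigr.
rewrite -(big_mkord predT (fun a => 'C(s - a + m, m))) big_nat_rev /= big_mkord.
rewrite -addSnnS -hockey; apply: eq_bigr => b _; congr 'C(_, _).
move: (ltn_ord b); lia.
Qed.

Lemma term_le m (f : 'I_m -> nat) j : f j <= \sum_i f i.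
Proof. by rewrite (bigD1 j) //= leq_addr. Qed.

Lemma T_fv N (v : {ffun 'I_N.+1 -> 'I_N.+1}) : T (fv v) N.+1 = \sum_j (v j : nat).
Proof. by rewrite /T big_mkord; apply: eq_bigr => j _; rewrite fv_ord. Qed.

Section Final.
Variables k n : nat.
Hypothesis hk : 0 < k.
Hypothesis hn : 0 < n.
Notation N := (k * n).
Notation V := {ffun 'I_N.+1 -> 'I_N.+1}.

Definition g (w : V) : V := [ffun j => inord (k * (w j + (j == ord0)))].

Lemma sum_g (w : V) : (forall j, k * (w j + (j == ord0)) <= N) ->
  \sum_j (g w j : nat) = k * (\sum_j (w j : nat) + 1).
Proof.
move=> h.
rewrite (eq_bigr (fun j => k * (w j + (j == ord0)))); last first.
  by move=> j _; rewrite ffunE inordK // ltnS.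
rewrite -big_distrr big_split /=; congr (k * (_ + _)).
by rewrite (bigD1 ord0) //= big1 => // i /negbTE ->.
Qed.

Lemma Bset_card : #|Bset N k| = 'C(n * (k + 1) - 1, n * k).
Proof.
pose W := [set w : V | \sum_j (w j : nat) == n.-1].
have nN : n <= N by apply: leq_pmull.
have hW : #|W| = 'C(n.-1 + N, N).
  by rewrite comp_count // ltnS (leq_trans (leq_pred n) nN).
have bnd : forall w, w \in W -> forall j, k * (w j + (j == ord0)) <= N.
  move=> w; rewrite inE => /eqP s j; rewrite leq_mul2l; apply/orP; right.
  have := term_le (fun i => (w i : nat)) j; rewrite s /=.
  case: (j == ord0) => /=; lia.
have inj : {in W &, injective g}.
  move=> w w' hw hw' e; apply/ffunP=> j; apply: val_inj.
  have := congr1 (fun f : V => (f j : nat)) e; rewrite /= !ffunE !inordK ?ltnS ?bnd //.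
  by move/eqP; rewrite eqn_mul2l eqn_add2r gtn_eqF //= => /eqP.
suff -> : Bset N k = [set g w | w in W].
  rewrite card_in_imset // hW mulnDr muln1 [n * k]mulnC; congr 'C(_, _); lia.
apply/setP=> v; apply/idP/imsetP.
  rewrite inE => /and3P [sv /forallP dv pos].
  have vk : forall j, v j = k * (v j %/ k) :> nat by move=> j; rewrite (mulnC k (v j %/ k)) divnK.
  pose w : V := [ffun j => inord (v j %/ k - (j == ord0))].
  have wv : forall j, (w j : nat) = v j %/ k - (j == ord0).
    move=> j; rewrite ffunE inordK //; apply: leq_ltn_trans (leq_subr _ _) _.
    by apply: leq_ltn_trans (leq_div _ _) (ltn_ord _).
  have pos' : 0 < v ord0 %/ k.
    by move: pos; rewrite [X in 0 < X -> _]vk muln_gt0 => /andP [_ ->].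
  have wv' : forall j, k * (w j + (j == ord0)) = v j.
    move=> j; rewrite wv [RHS]vk; congr (_ * _).
    case: (eqVneq j ord0) => [->|ne]; first by rewrite /= addn1 subn1 prednK.
    by rewrite /= subn0 addn0.
  have gw : g w = v.
    by apply/ffunP=> j; rewrite ffunE wv' inord_val.
  exists w => //; rewrite inE.
  have := sum_g (w := w); rewrite gw.
  move=> /(_ (fun j => eq_ind _ (fun x => x <= N) (ltnSE (ltn_ord (v j))) _ (esym (wv' j)))).
  rewrite T_fv in sv; rewrite (eqP sv) => /eqP; rewrite eqn_mul2l gtn_eqF //= => /eqP e.
  apply/eqP; lia.
case=> w hw ->; rewrite inE T_fv sum_g; last exact: bnd.
have hw' := hw; move: hw'; rewrite inE => /eqP ->; rewrite addn1 prednK // eqxx /=.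
apply/andP; split.
  by apply/forallP=> j; rewrite ffunE inordK ?dvdn_mulr // ltnS bnd.
rewrite ffunE inordK; last by rewrite ltnS bnd.
by rewrite /= muln_gt0 hk addn1.
Qed.

End Final.

Theorem corollary2p4 (k n : nat) (hk : 0 < k) (hn : 0 < n) :
  \sum_(P : {set {set 'I_(k * n)}} | NCk P) #|P| = 'C(n * (k + 1) - 1, n * k).
Proof.
rewrite -(Bset_card hk hn) -cyc_count.
transitivity (\sum_(P in [pred P : {set {set 'I_(k * n)}} | NCg k P]) nz (code P)).
  apply: eq_big => P; first by rewrite inE.
  by move=> hP; apply: card_nz; case/and3P: hP.
rewrite -big_imset /=; last exact: code_inj.
by apply: eq_bigl => u; rewrite code_image inE.
Qed.
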